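(* Let $\varepsilon_1>0$, $0<k<1$ and $E\ge1$. Then there exists $\varepsilon>0$ with the following property. Let $\mathcal{B}\subset\mathbb{R}^2$ be a (filled) ellipse centered at the origin, of eccentricity $\le E$ and diameter $\le\varepsilon_1$, and let $L\in\mathrm{SL}(2,\mathbb{R})$ satisfy $\|L-I\|<\varepsilon$ and $L(\mathcal{B})=\mathcal{B}$. Then there exists a $C^1$ area-preserving diffeomorphism $h:\mathbb{R}^2\to\mathbb{R}^2$ such that, with $\mathcal{B}'=\sqrt{k}\,\mathcal{B}$: (i) $z\notin\mathcal{B}\Rightarrow h(z)=z$; (ii) $z\in\mathcal{B}'\Rightarrow h(z)=L(z)$; (iii) $h$ preserves every ellipse $t\mathcal{B}$, $t>0$; (iv) $|h(z)-z|\le\varepsilon_1$ for all $z$; (v) $\|Dh_z-I\|\le\varepsilon_1$ for all $z$.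
   Context: A (filled) ellipse has eccentricity $E$ if it is the image of a disk under some $L\in\mathrm{SL}(2,\mathbb{R})$ with $\|L\|=E$; equivalently $E=\sqrt{\text{major axis}/\text{minor axis}}$. *)

(* Defs.v *)
From Stdlib Require Import Reals.
From Coquelicot Require Import Coquelicot.
Open Scope R_scope.

Definition pt : Type := (R * R)%type.
Definition padd (u v : pt) : pt := (fst u + fst v, snd u + snd v).
Definition psub (u v : pt) : pt := (fst u - fst v, snd u - snd v).
Definition pscale (t : R) (u : pt) : pt := (t * fst u, t * snd u).
Definition vnorm (u : pt) : R := sqrt (fst u ^ 2 + snd u ^ 2).

Record mat2 := Mat2 { m11 : R; m12 : R; m21 : R; m22 : R }.
Definition mapply (M : mat2) (u : pt) : pt :=
  (m11 M * fst u + m12 M * snd u, m21 M * fst u + m22 M * snd u).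
Definition mI : mat2 := Mat2 1 0 0 1.
Definition msub (M N : mat2) : mat2 :=
  Mat2 (m11 M - m11 N) (m12 M - m12 N) (m21 M - m21 N) (m22 M - m22 N).
Definition mdet (M : mat2) : R := m11 M * m22 M - m12 M * m21 M.

Definition opnorm (M : mat2) : R :=
  real (Lub_Rbar (fun s => exists u, vnorm u <= 1 /\ s = vnorm (mapply M u))).

Definition diameter (B : pt -> Prop) : R :=
  real (Lub_Rbar (fun s => exists x y, B x /\ B y /\ s = vnorm (psub x y))).

Definition image (f : pt -> pt) (B : pt -> Prop) : pt -> Prop :=
  fun w => exists z, B z /\ f z = w.
Definition dilate (t : R) (B : pt -> Prop) : pt -> Prop := image (pscale t) B.

(* B is a filled ellipse centred at the origin with eccentricity e:
   the image of a closed disk centred at 0 under some L0 in SL(2,R)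
   with ||L0|| = e. *)
Definition centered_ellipse_ecc (B : pt -> Prop) (e : R) : Prop :=
  exists (L0 : mat2) (r : R),
    0 < r /\ mdet L0 = 1 /\ opnorm L0 = e /\
    (forall z, B z <-> image (mapply L0) (fun w => vnorm w <= r) z).

Definition has_deriv (f : pt -> pt) (z : pt) (M : mat2) : Prop :=
  forall eps, 0 < eps -> exists delta, 0 < delta /\
    forall v, vnorm v < delta ->
      vnorm (psub (psub (f (padd z v)) (f z)) (mapply M v)) <= eps * vnorm v.

Definition mat_continuous (D : pt -> mat2) : Prop :=
  forall z eps, 0 < eps -> exists delta, 0 < delta /\
    forall w, vnorm (psub w z) < delta -> opnorm (msub (D w) (D z)) < eps.

Definition C1_with (f : pt -> pt) (D : pt -> mat2) : Prop :=
  (forall z, has_deriv f z (D z)) /\ mat_continuous D.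

Definition C1 (f : pt -> pt) : Prop := exists D, C1_with f D.

Definition C1_area_pres_diffeo (h : pt -> pt) (Dh : pt -> mat2) : Prop :=
  C1_with h Dh /\
  (exists g : pt -> pt,
     (forall z, g (h z) = z) /\ (forall w, h (g w) = w) /\ C1 g) /\
  (forall z, Rabs (mdet (Dh z)) = 1).

(* Main.v *)
Require Import Defs.
From Stdlib Require Import Reals.
From Coquelicot Require Import Coquelicot.
Open Scope R_scope.
From Stdlib Require Import Lra Lia Psatz Classical.

Lemma vnorm_ge0 u : 0 <= vnorm u.
Proof. apply sqrt_pos. Qed.

Lemma abs_le_vnorm1 u : Rabs (fst u) <= vnorm u.
Proof.
  unfold vnorm. rewrite <- sqrt_Rsqr_abs. apply sqrt_le_1_alt. unfold Rsqr.
  pose proof (pow2_ge_0 (snd u)). simpl. nra.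
Qed.

Lemma abs_le_vnorm2 u : Rabs (snd u) <= vnorm u.
Proof.
  unfold vnorm. rewrite <- sqrt_Rsqr_abs. apply sqrt_le_1_alt. unfold Rsqr.
  pose proof (pow2_ge_0 (fst u)). simpl. nra.
Qed.

Lemma vnorm_le_sum u : vnorm u <= Rabs (fst u) + Rabs (snd u).
Proof.
  unfold vnorm. pose proof (Rabs_pos (fst u)). pose proof (Rabs_pos (snd u)).
  rewrite <- (sqrt_Rsqr (Rabs (fst u) + Rabs (snd u))) by lra.
  apply sqrt_le_1_alt. unfold Rsqr.
  rewrite <- (pow2_abs (fst u)), <- (pow2_abs (snd u)). nra.
Qed.

Lemma vnorm_scale t u : vnorm (pscale t u) = Rabs t * vnorm u.
Proof.
  unfold vnorm, pscale; cbn [fst snd].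
  replace ((t * fst u) ^ 2 + (t * snd u) ^ 2) with (t ^ 2 * (fst u ^ 2 + snd u ^ 2)) by ring.
  rewrite sqrt_mult_alt by (apply pow2_ge_0).
  rewrite <- pow2_abs, sqrt_pow2 by apply Rabs_pos. reflexivity.
Qed.

Lemma vnorm_sq u : vnorm u ^ 2 = fst u ^ 2 + snd u ^ 2.
Proof. unfold vnorm. rewrite pow2_sqrt; [reflexivity|]. pose proof (pow2_ge_0 (fst u)); pose proof (pow2_ge_0 (snd u)); lra. Qed.

Lemma vnorm_le_iff u r : 0 <= r -> (vnorm u <= r <-> fst u ^ 2 + snd u ^ 2 <= r ^ 2).
Proof.
  intros Hr. rewrite <- vnorm_sq. pose proof (vnorm_ge0 u). split; intros; nra.
Qed.

Definition mF (A : mat2) := Rabs (m11 A) + Rabs (m12 A) + Rabs (m21 A) + Rabs (m22 A).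

Lemma mF_ge0 A : 0 <= mF A.
Proof. unfold mF. pose proof (Rabs_pos (m11 A)); pose proof (Rabs_pos (m12 A));
  pose proof (Rabs_pos (m21 A)); pose proof (Rabs_pos (m22 A)); lra. Qed.

Lemma lin_bound a b u : Rabs (a * fst u + b * snd u) <= (Rabs a + Rabs b) * vnorm u.
Proof.
  eapply Rle_trans; [apply Rabs_triang|]. rewrite !Rabs_mult.
  pose proof (abs_le_vnorm1 u); pose proof (abs_le_vnorm2 u).
  pose proof (Rabs_pos a); pose proof (Rabs_pos b).
  assert (Rabs a * Rabs (fst u) <= Rabs a * vnorm u) by (apply Rmult_le_compat_l; auto).
  assert (Rabs b * Rabs (snd u) <= Rabs b * vnorm u) by (apply Rmult_le_compat_l; auto).
  lra.
Qed.

Lemma mapply_bound A u : vnorm (mapply A u) <= mF A * vnorm u.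
Proof.
  eapply Rle_trans; [apply vnorm_le_sum|]. unfold mapply; simpl.
  pose proof (lin_bound (m11 A) (m12 A) u). pose proof (lin_bound (m21 A) (m22 A) u).
  unfold mF. lra.
Qed.

Lemma lub_facts (S : R -> Prop) s0 K : S s0 -> (forall s, S s -> s <= K) ->
  (forall s, S s -> s <= real (Lub_Rbar S)) /\ real (Lub_Rbar S) <= K.
Proof.
  intros H0 HK. destruct (Lub_Rbar_correct S) as [Hub Hl].
  assert (Hle : Rbar_le (Lub_Rbar S) K). { apply Hl. intros s Hs; simpl; apply HK; auto. }
  assert (Hge : Rbar_le s0 (Lub_Rbar S)) by (apply Hub; auto).
  destruct (Lub_Rbar S) as [l| |]; simpl in *; try tauto.
Qed.

Lemma opnorm_facts A :
  (forall u, vnorm u <= 1 -> vnorm (mapply A u) <= opnorm A) /\ opnorm A <= mF A.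
Proof.
  unfold opnorm.
  destruct (lub_facts (fun s => exists u, vnorm u <= 1 /\ s = vnorm (mapply A u))
     (vnorm (mapply A (0,0))) (mF A)) as [H1 H2].
  - exists (0,0). split; auto. unfold vnorm; cbn [fst snd].
    replace (0^2+0^2) with 0 by ring. rewrite sqrt_0. lra.
  - intros s [u [Hu ->]]. eapply Rle_trans; [apply mapply_bound|].
    pose proof (mF_ge0 A). nra.
  - split; auto. intros u Hu. apply H1. eauto.
Qed.

Lemma opnorm_le_F A : opnorm A <= mF A.
Proof. apply opnorm_facts. Qed.

Lemma vnorm_e1 : vnorm (1,0) = 1.
Proof. unfold vnorm; cbn [fst snd]. replace (1^2+0^2) with 1 by ring. apply sqrt_1. Qed.
Lemma vnorm_e2 : vnorm (0,1) = 1.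
Proof. unfold vnorm; cbn [fst snd]. replace (0^2+1^2) with 1 by ring. apply sqrt_1. Qed.

Lemma mF_le_opnorm A : mF A <= 4 * opnorm A.
Proof.
  destruct (opnorm_facts A) as [H _].
  pose proof (H (1,0) (Req_le _ _ vnorm_e1)) as H1.
  pose proof (H (0,1) (Req_le _ _ vnorm_e2)) as H2.
  pose proof (abs_le_vnorm1 (mapply A (1,0))). pose proof (abs_le_vnorm2 (mapply A (1,0))).
  pose proof (abs_le_vnorm1 (mapply A (0,1))). pose proof (abs_le_vnorm2 (mapply A (0,1))).
  unfold mapply in *; simpl in *.
  replace (m11 A * 1 + m12 A * 0) with (m11 A) in * by ring.
  replace (m21 A * 1 + m22 A * 0) with (m21 A) in * by ring.
  replace (m11 A * 0 + m12 A * 1) with (m12 A) in * by ring.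
  replace (m21 A * 0 + m22 A * 1) with (m22 A) in * by ring.
  unfold mF. lra.
Qed.

Definition mmul (A B : mat2) : mat2 :=
  Mat2 (m11 A * m11 B + m12 A * m21 B) (m11 A * m12 B + m12 A * m22 B)
       (m21 A * m11 B + m22 A * m21 B) (m21 A * m12 B + m22 A * m22 B).
Definition madj (M : mat2) : mat2 := Mat2 (m22 M) (- m12 M) (- m21 M) (m11 M).

Lemma mapply_mmul A B u : mapply (mmul A B) u = mapply A (mapply B u).
Proof. destruct u; unfold mapply, mmul; simpl; f_equal; ring. Qed.

Lemma mdet_mmul A B : mdet (mmul A B) = mdet A * mdet B.
Proof. unfold mdet, mmul; simpl; ring. Qed.

Lemma mdet_adj M : mdet (madj M) = mdet M.
Proof. unfold mdet, madj; simpl; ring. Qed.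

Lemma mF_adj M : mF (madj M) = mF M.
Proof. unfold mF, madj; simpl. rewrite !Rabs_Ropp. ring. Qed.

Lemma abs_tri2 a b c d : Rabs (a * b + c * d) <= Rabs a * Rabs b + Rabs c * Rabs d.
Proof. eapply Rle_trans; [apply Rabs_triang|]. rewrite !Rabs_mult. lra. Qed.

Lemma mF_mmul A B : mF (mmul A B) <= mF A * mF B.
Proof.
  unfold mF, mmul; simpl.
  pose proof (abs_tri2 (m11 A) (m11 B) (m12 A) (m21 B)).
  pose proof (abs_tri2 (m11 A) (m12 B) (m12 A) (m22 B)).
  pose proof (abs_tri2 (m21 A) (m11 B) (m22 A) (m21 B)).
  pose proof (abs_tri2 (m21 A) (m12 B) (m22 A) (m22 B)).
  set (a1 := Rabs (m11 A)) in *. set (a2 := Rabs (m12 A)) in *.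
  set (a3 := Rabs (m21 A)) in *. set (a4 := Rabs (m22 A)) in *.
  set (b1 := Rabs (m11 B)) in *. set (b2 := Rabs (m12 B)) in *.
  set (b3 := Rabs (m21 B)) in *. set (b4 := Rabs (m22 B)) in *.
  assert (0 <= a1) by apply Rabs_pos. assert (0 <= a2) by apply Rabs_pos.
  assert (0 <= a3) by apply Rabs_pos. assert (0 <= a4) by apply Rabs_pos.
  assert (0 <= b1) by apply Rabs_pos. assert (0 <= b2) by apply Rabs_pos.
  assert (0 <= b3) by apply Rabs_pos. assert (0 <= b4) by apply Rabs_pos.
  nra.
Qed.

Lemma adj_left M u : mdet M = 1 -> mapply (madj M) (mapply M u) = u.
Proof.
  intros H. destruct u as [x y]; unfold mapply, madj, mdet in *; simpl in *.
  f_equal.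
  - replace (m22 M * (m11 M * x + m12 M * y) + - m12 M * (m21 M * x + m22 M * y))
      with ((m11 M * m22 M - m12 M * m21 M) * x) by ring. rewrite H; ring.
  - replace (- m21 M * (m11 M * x + m12 M * y) + m11 M * (m21 M * x + m22 M * y))
      with ((m11 M * m22 M - m12 M * m21 M) * y) by ring. rewrite H; ring.
Qed.

Lemma adj_right M u : mdet M = 1 -> mapply M (mapply (madj M) u) = u.
Proof.
  intros H. destruct u as [x y]; unfold mapply, madj, mdet in *; simpl in *.
  f_equal.
  - replace (m11 M * (m22 M * x + - m12 M * y) + m12 M * (- m21 M * x + m11 M * y))
      with ((m11 M * m22 M - m12 M * m21 M) * x) by ring. rewrite H; ring.
  - replace (m21 M * (m22 M * x + - m12 M * y) + m22 M * (- m21 M * x + m11 M * y))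
      with ((m11 M * m22 M - m12 M * m21 M) * y) by ring. rewrite H; ring.
Qed.

Lemma mapply_scale A t u : mapply A (pscale t u) = pscale t (mapply A u).
Proof. unfold mapply, pscale; simpl; f_equal; ring. Qed.

Lemma mat_eq A B : m11 A = m11 B -> m12 A = m12 B -> m21 A = m21 B -> m22 A = m22 B -> A = B.
Proof. destruct A, B; simpl; intros; subst; reflexivity. Qed.

Definition sk (k q : R) := (q - k) / (1 - k).
Definition pk k q := sk k q * (1 - sk k q).
Definition psid (k q : R) := - (3 / (1 - k)) * (pk k q + Rabs (pk k q)).
Definition psi (k q : R) := 1 + RInt (psid k) k q.

Lemma pk_cont k x : k < 1 -> continuous (pk k) x.
Proof.
  intros Hk. apply (ex_derive_continuous (K:=R_AbsRing) (pk k)). unfold pk, sk. auto_derive. lra.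
Qed.

Lemma psid_cont k x : k < 1 -> continuous (psid k) x.
Proof.
  intros Hk. unfold psid.
  apply (continuous_mult (fun _ => - (3/(1-k))) (fun q => pk k q + Rabs (pk k q))).
  apply continuous_const.
  apply (continuous_plus (pk k) (fun q => Rabs (pk k q))).
  apply pk_cont; auto. apply continuous_Rabs_comp. apply pk_cont; auto.
Qed.

Lemma psi_deriv k q : k < 1 -> is_derive (psi k) q (psid k q).
Proof.
  intros Hk. unfold psi.
  replace (psid k q) with (plus zero (psid k q)) by (unfold plus, zero; simpl; ring).
  apply (is_derive_plus (fun _ => 1) (fun b => RInt (psid k) k b)).
  apply (is_derive_const (K:=R_AbsRing) (V:=R_NormedModule)).
  apply (is_derive_RInt (V:=R_CompleteNormedModule) (psid k) (fun b => RInt (psid k) k b) k q).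
  - exists (mkposreal 1 Rlt_0_1). intros y _. apply RInt_correct, ex_RInt_continuous.
    intros; apply psid_cont; auto.
  - apply psid_cont; auto.
Qed.

Lemma psid_left k q : 0 < k < 1 -> q <= k -> psid k q = 0.
Proof.
  intros Hk Hq. unfold psid, pk.
  assert (sk k q <= 0). { unfold sk. apply Rmult_le_0_r. lra. left; apply Rinv_0_lt_compat; lra. }
  rewrite Rabs_left1 by nra. ring.
Qed.

Lemma psid_right k q : 0 < k < 1 -> 1 <= q -> psid k q = 0.
Proof.
  intros Hk Hq. unfold psid, pk.
  assert (1 <= sk k q). { unfold sk. apply Rmult_le_reg_r with (1 - k). lra.
    unfold Rdiv. rewrite Rmult_assoc, Rinv_l by lra. lra. }
  rewrite Rabs_left1 by nra. ring.
Qed.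

Lemma sk_mid k q : 0 < k < 1 -> k <= q <= 1 -> 0 <= sk k q <= 1.
Proof.
  intros Hk Hq. unfold sk. split.
  - apply Rmult_le_pos. lra. left; apply Rinv_0_lt_compat; lra.
  - apply Rmult_le_reg_r with (1 - k). lra.
    unfold Rdiv. rewrite Rmult_assoc, Rinv_l by lra. lra.
Qed.

Lemma psid_mid k q : 0 < k < 1 -> k <= q <= 1 -> psid k q = - (6 / (1 - k)) * pk k q.
Proof.
  intros Hk Hq. pose proof (sk_mid k q Hk Hq). unfold psid.
  assert (0 <= pk k q) by (unfold pk; nra).
  rewrite Rabs_pos_eq by auto. unfold Rdiv. ring.
Qed.

Lemma psid_bound k q : 0 < k < 1 -> Rabs (psid k q) <= 3 / (1 - k).
Proof.
  intros Hk. unfold psid.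
  assert (pk k q <= 1/4) by (unfold pk; pose proof (pow2_ge_0 (sk k q - 1/2)); nra).
  assert (0 <= pk k q + Rabs (pk k q) <= 1/2).
  { destruct (Rle_or_lt 0 (pk k q)). rewrite Rabs_pos_eq by auto; lra.
    rewrite Rabs_left by auto; lra. }
  assert (0 < 3/(1-k)) by (unfold Rdiv; apply Rmult_lt_0_compat; [lra| apply Rinv_0_lt_compat; lra]).
  rewrite Rabs_mult, Rabs_Ropp, (Rabs_pos_eq (3/(1-k))) by lra.
  rewrite (Rabs_pos_eq (_ + _)) by lra.
  nra.
Qed.

Lemma RInt_zero_ext k a b : (forall x, Rmin a b < x < Rmax a b -> psid k x = 0) ->
  RInt (psid k) a b = 0.
Proof.
  intros H. rewrite (RInt_ext _ (fun _ => 0)) by auto.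
  rewrite RInt_const. simpl. unfold scal; simpl. unfold mult; simpl. ring.
Qed.

Lemma psi_left k q : 0 < k < 1 -> q <= k -> psi k q = 1.
Proof.
  intros Hk Hq. unfold psi. rewrite RInt_zero_ext. ring.
  intros x Hx. apply psid_left; auto. rewrite Rmax_left in Hx by lra. lra.
Qed.

Definition psi_poly k q := 1 - 3 * sk k q ^ 2 + 2 * sk k q ^ 3.

Lemma psi_mid k q : 0 < k < 1 -> k <= q <= 1 -> psi k q = psi_poly k q.
Proof.
  intros Hk Hq. unfold psi.
  rewrite (RInt_ext _ (fun x => - (6 / (1 - k)) * pk k x)).
  2:{ intros x Hx. rewrite Rmin_left in Hx by lra. rewrite Rmax_right in Hx by lra.
      apply psid_mid; lra. }
  rewrite (is_RInt_unique _ k q (minus (psi_poly k q - 1) (psi_poly k k - 1))).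
  - unfold minus, plus, opp; simpl. unfold psi_poly, sk.
    replace (k - k) with 0 by ring. field. lra.
  - apply (is_RInt_derive (fun x => psi_poly k x - 1)).
    + intros x _. unfold psi_poly, pk, sk. auto_derive. lra. field. lra.
    + intros x _. apply (continuous_mult (fun _ => - (6/(1-k))) (pk k)).
      apply continuous_const. apply pk_cont; lra.
Qed.

Lemma psi_right k q : 0 < k < 1 -> 1 <= q -> psi k q = 0.
Proof.
  intros Hk Hq. pose proof (psi_mid k 1 Hk (conj (Rlt_le _ _ (proj2 Hk)) (Rle_refl 1))) as H1.
  unfold psi in *.
  rewrite <- (RInt_Chasles (psid k) k 1 q).
  - rewrite (RInt_zero_ext k 1 q).
    + unfold plus; simpl. unfold psi_poly, sk in H1. replace ((1 - k) / (1 - k)) with 1 in H1 by (field; lra).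
      lra.
    + intros x Hx. apply psid_right; auto. rewrite Rmin_left in Hx by lra. lra.
  - apply ex_RInt_continuous; intros; apply psid_cont; lra.
  - apply ex_RInt_continuous; intros; apply psid_cont; lra.
Qed.

Lemma psi_bound k q : 0 < k < 1 -> 0 <= psi k q <= 1.
Proof.
  intros Hk. destruct (Rle_or_lt q k).
  - rewrite psi_left; auto; lra.
  - destruct (Rle_or_lt q 1).
    + rewrite psi_mid by lra. pose proof (sk_mid k q Hk (conj (Rlt_le _ _ H) H0)).
      unfold psi_poly. set (s := sk k q) in *.
      replace (1 - 3 * s ^ 2 + 2 * s ^ 3) with ((1-s)^2*(1+2*s)) by ring.
      assert (0 <= (1-s)^2) by apply pow2_ge_0.
      assert (s^2*(3-2*s) >= 0) by (pose proof (pow2_ge_0 s); nra).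
      split; [nra|]. replace ((1-s)^2*(1+2*s)) with (1 - s^2*(3-2*s)) by ring. lra.
    + rewrite psi_right by lra. lra.
Qed.

Definition sdiff (f : R * R -> R) (z : R * R) (a b : R) :=
  filterdiff f (locally z) (fun v : R * R => a * fst v + b * snd v).

Lemma minus_padd (z v : R * R) : minus (padd z v) z = v.
Proof. destruct z, v. unfold minus, plus, opp, padd; simpl.
  unfold prod_plus, prod_opp; simpl. unfold plus, opp; simpl. f_equal; ring. Qed.

Lemma prod_norm_vnorm (v : R * R) : norm v = vnorm v.
Proof. destruct v. unfold norm; simpl. unfold prod_norm, vnorm; simpl.
  unfold norm; simpl. unfold abs; simpl.
  f_equal. rewrite !Rmult_1_r, <- !Rabs_mult. rewrite !Rabs_pos_eq by (apply Rle_0_sqr). reflexivity. Qed.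

Lemma sdiff_eps f z a b : sdiff f z a b -> forall eps, 0 < eps -> exists delta, 0 < delta /\
  forall v, vnorm v < delta ->
    Rabs (f (padd z v) - f z - (a * fst v + b * snd v)) <= eps * vnorm v.
Proof.
  intros [_ H] eps Heps.
  specialize (H z (fun P HP => HP) (mkposreal eps Heps)).
  destruct H as [d Hd]. exists d. split. apply cond_pos. intros v Hv.
  specialize (Hd (padd z v)).
  rewrite minus_padd, prod_norm_vnorm in Hd. simpl in Hd.
  apply Hd. split; unfold ball; simpl; unfold AbsRing_ball, abs, minus, plus, opp; simpl.
  - destruct z, v; simpl. replace (r + r1 + - r) with r1 by ring.
    eapply Rle_lt_trans; [apply (abs_le_vnorm1 (r1, r2))|auto].
  - destruct z, v; simpl. replace (r0 + r2 + - r0) with r2 by ring.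
    eapply Rle_lt_trans; [apply (abs_le_vnorm2 (r1, r2))|auto].
Qed.

Lemma sdiff_lin (f : R * R -> R) z l a b : filterdiff f (locally z) l ->
  (forall v : R * R, l v = a * fst v + b * snd v) -> sdiff f z a b.
Proof. intros H He. unfold sdiff. eapply filterdiff_ext_lin; eauto. Qed.

Lemma sdiff_fst z : sdiff fst z 1 0.
Proof. eapply sdiff_lin. apply filterdiff_linear, is_linear_fst. intros; simpl; ring. Qed.

Lemma sdiff_snd z : sdiff snd z 0 1.
Proof. eapply sdiff_lin. apply filterdiff_linear, is_linear_snd. intros; simpl; ring. Qed.

Lemma sdiff_const c z : sdiff (fun _ => c) z 0 0.
Proof. eapply sdiff_lin. apply filterdiff_const. intros; simpl; unfold zero; simpl; ring. Qed.

Lemma sdiff_plus f g z a b c d : sdiff f z a b -> sdiff g z c d ->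
  sdiff (fun w => f w + g w) z (a + c) (b + d).
Proof. intros Hf Hg. eapply sdiff_lin. apply (filterdiff_plus_fct _ _ _ _ Hf Hg).
  intros; simpl; unfold plus; simpl; ring. Qed.

Lemma sdiff_minus f g z a b c d : sdiff f z a b -> sdiff g z c d ->
  sdiff (fun w => f w - g w) z (a - c) (b - d).
Proof. intros Hf Hg. eapply sdiff_lin. apply (filterdiff_minus_fct _ _ _ _ Hf Hg).
  intros; simpl; unfold minus, plus, opp; simpl; ring. Qed.

Lemma sdiff_mult f g z a b c d : sdiff f z a b -> sdiff g z c d ->
  sdiff (fun w => f w * g w) z (a * g z + f z * c) (b * g z + f z * d).
Proof. intros Hf Hg. eapply sdiff_lin.
  apply (filterdiff_mult_fct f g z _ _ Rmult_comm Hf Hg).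
  intros; simpl; unfold plus, mult; simpl; ring. Qed.

Lemma sdiff_comp f (phi : R -> R) z a b d : sdiff f z a b -> is_derive phi (f z) d ->
  sdiff (fun w => phi (f w)) z (d * a) (d * b).
Proof. intros Hf Hp. eapply sdiff_lin.
  apply (filterdiff_comp' f phi z _ _ Hf Hp).
  intros; simpl; unfold scal; simpl; unfold mult; simpl; ring. Qed.

Lemma sdiff_ext f g z a b : (forall w, f w = g w) -> sdiff f z a b -> sdiff g z a b.
Proof. intros He Hf. unfold sdiff. eapply filterdiff_ext; eauto. Qed.

Lemma sdiff_eq f z a b a' b' : a = a' -> b = b' -> sdiff f z a b -> sdiff f z a' b'.
Proof. intros; subst; auto. Qed.

Lemma sdiff_cont f z a b : sdiff f z a b -> continuous f z.
Proof. intros H. apply (filterdiff_continuous (K:=R_AbsRing) (V:=R_NormedModule) f). eexists; eauto. Qed.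

Lemma has_deriv_of_sdiff f1 f2 z a b c d : sdiff f1 z a b -> sdiff f2 z c d ->
  has_deriv (fun w => (f1 w, f2 w)) z (Mat2 a b c d).
Proof.
  intros H1 H2 eps Heps.
  destruct (sdiff_eps _ _ _ _ H1 (eps/2)) as [d1 [Hd1 K1]]; [lra|].
  destruct (sdiff_eps _ _ _ _ H2 (eps/2)) as [d2 [Hd2 K2]]; [lra|].
  exists (Rmin d1 d2). split. apply Rmin_pos; auto.
  intros v Hv. specialize (K1 v (Rlt_le_trans _ _ _ Hv (Rmin_l _ _))).
  specialize (K2 v (Rlt_le_trans _ _ _ Hv (Rmin_r _ _))).
  eapply Rle_trans; [apply vnorm_le_sum|]. unfold psub, mapply; simpl. lra.
Qed.

Lemma cont_eps (f : R * R -> R) z : continuous f z -> forall eps, 0 < eps -> exists delta, 0 < delta /\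
  forall w, vnorm (psub w z) < delta -> Rabs (f w - f z) < eps.
Proof.
  intros H eps Heps.
  assert (Hl : locally (f z) (ball (f z) (mkposreal eps Heps))) by apply locally_ball.
  specialize (H _ Hl). destruct H as [d Hd]. exists d. split. apply cond_pos.
  intros w Hw. specialize (Hd w). simpl in Hd. unfold ball in Hd; simpl in Hd.
  unfold AbsRing_ball, abs, minus, plus, opp in Hd; simpl in Hd. apply Hd.
  split; unfold ball; simpl; unfold AbsRing_ball, abs, minus, plus, opp; simpl.
  - eapply Rle_lt_trans; [apply (abs_le_vnorm1 (psub w z))|auto].
  - eapply Rle_lt_trans; [apply (abs_le_vnorm2 (psub w z))|auto].
Qed.

Lemma mat_continuous_of_cont (D : pt -> mat2) :
  (forall z, continuous (fun w => m11 (D w)) z) ->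
  (forall z, continuous (fun w => m12 (D w)) z) ->
  (forall z, continuous (fun w => m21 (D w)) z) ->
  (forall z, continuous (fun w => m22 (D w)) z) -> mat_continuous D.
Proof.
  intros C1 C2 C3 C4 z eps Heps.
  destruct (cont_eps _ _ (C1 z) (eps/4)) as [d1 [P1 Q1]]; [lra|].
  destruct (cont_eps _ _ (C2 z) (eps/4)) as [d2 [P2 Q2]]; [lra|].
  destruct (cont_eps _ _ (C3 z) (eps/4)) as [d3 [P3 Q3]]; [lra|].
  destruct (cont_eps _ _ (C4 z) (eps/4)) as [d4 [P4 Q4]]; [lra|].
  exists (Rmin (Rmin d1 d2) (Rmin d3 d4)). split.
  repeat apply Rmin_pos; auto.
  intros w Hw.
  pose proof (Rmin_l (Rmin d1 d2) (Rmin d3 d4)). pose proof (Rmin_r (Rmin d1 d2) (Rmin d3 d4)).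
  pose proof (Rmin_l d1 d2). pose proof (Rmin_r d1 d2). pose proof (Rmin_l d3 d4). pose proof (Rmin_r d3 d4).
  specialize (Q1 w ltac:(lra)). specialize (Q2 w ltac:(lra)).
  specialize (Q3 w ltac:(lra)). specialize (Q4 w ltac:(lra)).
  eapply Rle_lt_trans; [apply opnorm_le_F|]. unfold mF, msub; simpl. lra.
Qed.

Definition cf (x : R) := (1 - x ^ 2) / (1 + x ^ 2).
Definition sf (x : R) := 2 * x / (1 + x ^ 2).
Definition cfd (x : R) := - 4 * x / (1 + x ^ 2) ^ 2.
Definition sfd (x : R) := 2 * (1 - x ^ 2) / (1 + x ^ 2) ^ 2.

Lemma one_plus_sq_pos x : 0 < 1 + x ^ 2.
Proof. pose proof (pow2_ge_0 x); lra. Qed.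

Lemma cf_deriv x : is_derive cf x (cfd x).
Proof. pose proof (one_plus_sq_pos x). unfold cf, cfd. auto_derive. lra. field. lra. Qed.
Lemma sf_deriv x : is_derive sf x (sfd x).
Proof. pose proof (one_plus_sq_pos x). unfold sf, sfd. auto_derive. lra. field. lra. Qed.

Lemma cont1 (f : R -> R) x : ex_derive f x -> continuous f x.
Proof. intros H. apply (ex_derive_continuous (K:=R_AbsRing) f). auto. Qed.

Lemma cfd_cont x : continuous cfd x.
Proof. apply cont1. pose proof (one_plus_sq_pos x). unfold cfd. auto_derive. nra. Qed.
Lemma sfd_cont x : continuous sfd x.
Proof. apply cont1. pose proof (one_plus_sq_pos x). unfold sfd. auto_derive. nra. Qed.
Lemma cf_cont x : continuous cf x.
Proof. apply cont1. eexists; apply cf_deriv. Qed.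
Lemma sf_cont x : continuous sf x.
Proof. apply cont1. eexists; apply sf_deriv. Qed.

Lemma cf_sf x : cf x ^ 2 + sf x ^ 2 = 1.
Proof. pose proof (one_plus_sq_pos x). unfold cf, sf. field. lra. Qed.
Lemma cf_opp x : cf (- x) = cf x.
Proof. unfold cf. f_equal; ring. Qed.
Lemma sf_opp x : sf (- x) = - sf x.
Proof. unfold sf. replace ((-x)^2) with (x^2) by ring. unfold Rdiv; ring. Qed.
Lemma cf_0 : cf 0 = 1.
Proof. unfold cf. field_simplify; lra. Qed.
Lemma sf_0 : sf 0 = 0.
Proof. unfold sf. unfold Rdiv; ring. Qed.

Definition qf (r : R) (w : R * R) := (fst w * fst w + snd w * snd w) * / (r * r).
Definition sig k r t (w : R * R) := t * psi k (qf r w).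
Definition mu k r t (w : R * R) := t * psid k (qf r w) * 2 / (r * r).
Definition rot (s : R) (w : R * R) : R * R :=
  (cf s * fst w - sf s * snd w, sf s * fst w + cf s * snd w).
Definition gmap k r t (w : R * R) : R * R := rot (sig k r t w) w.
Definition Dg k r t (w : R * R) : mat2 :=
  let s := sig k r t w in let m := mu k r t w in
  let A := cfd s * fst w - sfd s * snd w in
  let B := sfd s * fst w + cfd s * snd w in
  Mat2 (cf s + m * fst w * A) (- sf s + m * snd w * A)
       (sf s + m * fst w * B) (cf s + m * snd w * B).

Lemma sdiff_qf r w : r <> 0 -> sdiff (qf r) w (2 * fst w / (r * r)) (2 * snd w / (r * r)).
Proof.
  intros Hr.
  pose proof (sdiff_mult _ _ w _ _ _ _ (sdiff_fst w) (sdiff_fst w)) as H1.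
  pose proof (sdiff_mult _ _ w _ _ _ _ (sdiff_snd w) (sdiff_snd w)) as H2.
  pose proof (sdiff_plus _ _ w _ _ _ _ H1 H2) as H3.
  pose proof (sdiff_mult _ _ w _ _ _ _ H3 (sdiff_const (/ (r * r)) w)) as H4.
  unfold qf. simpl in H4.
  eapply sdiff_eq; [| | exact H4].
  - field. auto.
  - field. auto.
Qed.

Lemma sdiff_sig k r t w : 0 < k < 1 -> r <> 0 ->
  sdiff (sig k r t) w (mu k r t w * fst w) (mu k r t w * snd w).
Proof.
  intros Hk Hr.
  pose proof (sdiff_comp _ (psi k) w _ _ _ (sdiff_qf r w Hr) (psi_deriv k (qf r w) ltac:(lra))) as H1.
  pose proof (sdiff_mult _ _ w _ _ _ _ (sdiff_const t w) H1) as H2.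
  unfold sig. eapply sdiff_eq; [| | exact H2].
  - unfold mu. field. auto.
  - unfold mu. field. auto.
Qed.

Lemma has_deriv_gmap k r t w : 0 < k < 1 -> r <> 0 ->
  has_deriv (gmap k r t) w (Dg k r t w).
Proof.
  intros Hk Hr. pose proof (sdiff_sig k r t w Hk Hr) as Hs.
  pose proof (sdiff_comp _ cf w _ _ _ Hs (cf_deriv _)) as Hc.
  pose proof (sdiff_comp _ sf w _ _ _ Hs (sf_deriv _)) as Hn.
  pose proof (sdiff_mult _ _ w _ _ _ _ Hc (sdiff_fst w)) as Hc1.
  pose proof (sdiff_mult _ _ w _ _ _ _ Hc (sdiff_snd w)) as Hc2.
  pose proof (sdiff_mult _ _ w _ _ _ _ Hn (sdiff_fst w)) as Hn1.
  pose proof (sdiff_mult _ _ w _ _ _ _ Hn (sdiff_snd w)) as Hn2.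
  pose proof (sdiff_minus _ _ w _ _ _ _ Hc1 Hn2) as G1.
  pose proof (sdiff_plus _ _ w _ _ _ _ Hn1 Hc2) as G2.
  pose proof (has_deriv_of_sdiff _ _ w _ _ _ _ G1 G2) as HD.
  unfold gmap, rot. replace (Dg k r t w) with (Mat2
         ((cfd (sig k r t w) * (mu k r t w * fst w)) * fst w + cf (sig k r t w) * 1 -
          ((sfd (sig k r t w) * (mu k r t w * fst w)) * snd w + sf (sig k r t w) * 0))
         ((cfd (sig k r t w) * (mu k r t w * snd w)) * fst w + cf (sig k r t w) * 0 -
          ((sfd (sig k r t w) * (mu k r t w * snd w)) * snd w + sf (sig k r t w) * 1))
         ((sfd (sig k r t w) * (mu k r t w * fst w)) * fst w + sf (sig k r t w) * 1 +
          ((cfd (sig k r t w) * (mu k r t w * fst w)) * snd w + cf (sig k r t w) * 0))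
         ((sfd (sig k r t w) * (mu k r t w * snd w)) * fst w + sf (sig k r t w) * 0 +
          ((cfd (sig k r t w) * (mu k r t w * snd w)) * snd w + cf (sig k r t w) * 1))).
  exact HD.
  unfold Dg; simpl. apply mat_eq; simpl; ring.
Qed.

Lemma cont_plus (f g : R * R -> R) z : continuous f z -> continuous g z ->
  continuous (fun w => f w + g w) z.
Proof. intros; apply (continuous_plus f g z); auto. Qed.
Lemma cont_minus (f g : R * R -> R) z : continuous f z -> continuous g z ->
  continuous (fun w => f w - g w) z.
Proof. intros; apply (continuous_minus f g z); auto. Qed.
Lemma cont_mult (f g : R * R -> R) z : continuous f z -> continuous g z ->
  continuous (fun w => f w * g w) z.
Proof. intros; apply (continuous_mult f g z); auto. Qed.
Lemma cont_opp (f : R * R -> R) z : continuous f z -> continuous (fun w => - f w) z.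
Proof. intros; apply (continuous_opp f z); auto. Qed.
Lemma cont_const (c : R) (z : R * R) : continuous (fun _ : R * R => c) z.
Proof. apply continuous_const. Qed.
Lemma cont_fst (z : R * R) : continuous (fun w : R * R => fst w) z.
Proof. destruct z; apply continuous_fst. Qed.
Lemma cont_snd (z : R * R) : continuous (fun w : R * R => snd w) z.
Proof. destruct z; apply continuous_snd. Qed.
Lemma cont_comp1 (f : R * R -> R) (phi : R -> R) z : continuous f z -> continuous phi (f z) ->
  continuous (fun w => phi (f w)) z.
Proof. intros; apply (continuous_comp f phi z); auto. Qed.

Lemma cont_sig k r t z : 0 < k < 1 -> r <> 0 -> continuous (sig k r t) z.
Proof. intros. eapply sdiff_cont. apply sdiff_sig; auto. Qed.
Lemma cont_qf r z : r <> 0 -> continuous (qf r) z.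
Proof. intros. eapply sdiff_cont. apply sdiff_qf; auto. Qed.
Lemma cont_mu k r t z : 0 < k < 1 -> r <> 0 -> continuous (mu k r t) z.
Proof.
  intros. unfold mu, Rdiv.
  apply cont_mult; [|apply cont_const]. apply cont_mult; [|apply cont_const].
  apply cont_mult; [apply cont_const|]. apply cont_comp1. apply cont_qf; auto.
  apply psid_cont; lra.
Qed.

Lemma cont_sigf (phi : R -> R) k r t z : 0 < k < 1 -> r <> 0 -> (forall x, continuous phi x) ->
  continuous (fun w => phi (sig k r t w)) z.
Proof. intros. apply cont_comp1. apply cont_sig; auto. auto. Qed.

Ltac ct := lazymatch goal with
 | |- continuous (fun w => _ + _) _ => apply cont_plus; ct
 | |- continuous (fun w => _ - _) _ => apply cont_minus; ct
 | |- continuous (fun w => _ * _) _ => apply cont_mult; ct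
 | |- continuous (fun w => - _) _ => apply cont_opp; ct
 | |- continuous (fun w => fst w) _ => apply cont_fst
 | |- continuous (fun w => snd w) _ => apply cont_snd
 | |- continuous (fun w => cf (sig _ _ _ w)) _ => apply cont_sigf; [lra|auto|apply cf_cont]
 | |- continuous (fun w => sf (sig _ _ _ w)) _ => apply cont_sigf; [lra|auto|apply sf_cont]
 | |- continuous (fun w => cfd (sig _ _ _ w)) _ => apply cont_sigf; [lra|auto|apply cfd_cont]
 | |- continuous (fun w => sfd (sig _ _ _ w)) _ => apply cont_sigf; [lra|auto|apply sfd_cont]
 | |- continuous (fun w => mu _ _ _ w) _ => apply cont_mu; [lra|auto]
 | |- continuous (mu _ _ _) _ => apply cont_mu; [lra|auto]
 | |- continuous fst _ => apply cont_fst
 | |- continuous snd _ => apply cont_snd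
 | |- continuous (fun w => _) _ => apply cont_const
 end.

Lemma Dg_cont k r t : 0 < k < 1 -> r <> 0 -> mat_continuous (Dg k r t).
Proof.
  intros Hk Hr. apply mat_continuous_of_cont; intros z; unfold Dg; simpl; ct.
Qed.

Lemma Dg_det k r t w : mdet (Dg k r t w) = 1.
Proof.
  unfold Dg, mdet; simpl. set (s := sig k r t w). set (m := mu k r t w).
  pose proof (one_plus_sq_pos s).
  unfold cf, sf, cfd, sfd. field. lra.
Qed.

Lemma mapply_padd A u v : mapply A (padd u v) = padd (mapply A u) (mapply A v).
Proof. unfold mapply, padd; simpl; f_equal; ring. Qed.
Lemma mapply_psub A u v : mapply A (psub u v) = psub (mapply A u) (mapply A v).
Proof. unfold mapply, psub; simpl; f_equal; ring. Qed.

Lemma has_deriv_conj A Bm g D z : has_deriv g (mapply Bm z) D ->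
  has_deriv (fun z => mapply A (g (mapply Bm z))) z (mmul A (mmul D Bm)).
Proof.
  intros H eps Heps.
  pose proof (mF_ge0 A). pose proof (mF_ge0 Bm).
  set (K := mF A * mF Bm + 1).
  assert (HK : 0 < K) by (unfold K; nra).
  destruct (H (eps / K)) as [d [Hd Hv]]. apply Rdiv_lt_0_compat; auto.
  exists (d / (mF Bm + 1)). split. apply Rdiv_lt_0_compat; lra.
  intros v Hvn.
  pose proof (vnorm_ge0 v).
  assert (Hu : vnorm (mapply Bm v) < d).
  { eapply Rle_lt_trans; [apply mapply_bound|].
    apply Rlt_le_trans with ((mF Bm + 1) * (d / (mF Bm + 1))).
    - destruct (Req_dec (vnorm v) 0) as [E0|E0].
      + rewrite E0, Rmult_0_r. apply Rmult_lt_0_compat. lra. apply Rdiv_lt_0_compat; lra.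
      + assert (0 < vnorm v) by lra. 
        apply Rle_lt_trans with (mF Bm * (d / (mF Bm + 1))). apply Rmult_le_compat_l; lra.
        apply Rmult_lt_compat_r. apply Rdiv_lt_0_compat; lra. lra.
    - right. field. lra. }
  specialize (Hv _ Hu).
  rewrite mapply_mmul, mapply_mmul, mapply_padd, <- !mapply_psub.
  eapply Rle_trans; [apply mapply_bound|].
  eapply Rle_trans. apply Rmult_le_compat_l; [auto|exact Hv].
  pose proof (mapply_bound Bm v).
  assert (0 <= eps / K) by (apply Rlt_le, Rdiv_lt_0_compat; auto).
  apply Rle_trans with (mF A * (eps / K) * (mF Bm * vnorm v)).
  { rewrite Rmult_assoc. apply Rmult_le_compat_l; auto. apply Rmult_le_compat_l; auto. }
  replace (mF A * (eps / K) * (mF Bm * vnorm v)) with (eps * vnorm v * ((mF A * mF Bm) / K)) by (field; lra).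
  assert ((mF A * mF Bm) / K <= 1).
  { apply (Rmult_le_reg_r K); auto. unfold Rdiv. rewrite Rmult_assoc, Rinv_l by lra. unfold K; lra. }
  assert (0 <= (mF A * mF Bm) / K) by (apply Rdiv_le_0_compat; nra).
  assert (0 <= eps * vnorm v) by nra. nra.
Qed.

Lemma mat_cont_conj A Bm D : mat_continuous D ->
  mat_continuous (fun z => mmul A (mmul (D (mapply Bm z)) Bm)).
Proof.
  intros H z eps Heps.
  pose proof (mF_ge0 A). pose proof (mF_ge0 Bm).
  set (K := 4 * mF A * mF Bm + 1).
  assert (HK : 0 < K) by (unfold K; nra).
  destruct (H (mapply Bm z) (eps / K)) as [d [Hd Hv]]. apply Rdiv_lt_0_compat; auto.
  exists (d / (mF Bm + 1)). split. apply Rdiv_lt_0_compat; lra.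
  intros w Hw.
  assert (Hu : vnorm (psub (mapply Bm w) (mapply Bm z)) < d).
  { rewrite <- mapply_psub. eapply Rle_lt_trans; [apply mapply_bound|].
    pose proof (vnorm_ge0 (psub w z)).
    apply Rle_lt_trans with ((mF Bm + 1) * vnorm (psub w z)). nra.
    apply Rlt_le_trans with ((mF Bm + 1) * (d / (mF Bm + 1))).
    apply Rmult_lt_compat_l; lra. right; field; lra. }
  specialize (Hv _ Hu).
  set (X := msub (D (mapply Bm w)) (D (mapply Bm z))) in *.
  replace (msub (mmul A (mmul (D (mapply Bm w)) Bm)) (mmul A (mmul (D (mapply Bm z)) Bm)))
    with (mmul A (mmul X Bm)) by (unfold X; apply mat_eq; unfold mmul, msub; simpl; ring).
  eapply Rle_lt_trans; [apply opnorm_le_F|].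
  eapply Rle_lt_trans; [apply mF_mmul|].
  pose proof (mF_mmul X Bm). pose proof (mF_le_opnorm X). pose proof (mF_ge0 X).
  pose proof (mF_ge0 (mmul X Bm)).
  apply Rle_lt_trans with (mF A * (4 * opnorm X * mF Bm)).
  { apply Rmult_le_compat_l; auto. eapply Rle_trans; eauto. apply Rmult_le_compat_r; auto. }
  assert (0 <= opnorm X) by lra.
  apply Rle_lt_trans with (opnorm X * K). unfold K; nra.
  apply (Rmult_lt_reg_r (/ K)). apply Rinv_0_lt_compat; auto.
  rewrite Rmult_assoc, Rinv_r by lra. rewrite Rmult_1_r. exact Hv.
Qed.

Definition hmap M k r t (z : pt) : pt := mapply M (gmap k r t (mapply (madj M) z)).
Definition Dh M k r t (z : pt) : mat2 := mmul M (mmul (Dg k r t (mapply (madj M) z)) (madj M)).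

Lemma hmap_C1 M k r t : 0 < k < 1 -> r <> 0 -> C1_with (hmap M k r t) (Dh M k r t).
Proof.
  intros Hk Hr. split.
  - intros z. unfold hmap, Dh. apply has_deriv_conj. apply has_deriv_gmap; auto.
  - unfold Dh. apply mat_cont_conj. apply Dg_cont; auto.
Qed.

Lemma rot_norm s w : fst (rot s w) ^ 2 + snd (rot s w) ^ 2 = fst w ^ 2 + snd w ^ 2.
Proof.
  unfold rot; cbn [fst snd]. pose proof (cf_sf s).
  replace ((cf s * fst w - sf s * snd w) ^ 2 + (sf s * fst w + cf s * snd w) ^ 2)
    with ((cf s ^ 2 + sf s ^ 2) * (fst w ^ 2 + snd w ^ 2)) by ring.
  rewrite H; ring.
Qed.

Lemma vnorm_rot s w : vnorm (rot s w) = vnorm w.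
Proof. unfold vnorm. rewrite rot_norm. reflexivity. Qed.

Lemma qf_rot r s w : qf r (rot s w) = qf r w.
Proof. unfold qf. pose proof (rot_norm s w). simpl in H.
  replace (fst (rot s w) * fst (rot s w) + snd (rot s w) * snd (rot s w))
    with (fst w * fst w + snd w * snd w) by (simpl in *; lra). reflexivity. Qed.

Lemma rot_inv s w : rot (- s) (rot s w) = w.
Proof.
  destruct w as [x y]. unfold rot; cbn [fst snd]. rewrite cf_opp, sf_opp. pose proof (cf_sf s).
  f_equal.
  - replace (cf s * (cf s * x - sf s * y) - - sf s * (sf s * x + cf s * y))
      with ((cf s ^ 2 + sf s ^ 2) * x) by ring. rewrite H; ring.
  - replace (- sf s * (cf s * x - sf s * y) + cf s * (sf s * x + cf s * y))
      with ((cf s ^ 2 + sf s ^ 2) * y) by ring. rewrite H; ring.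
Qed.

Lemma rot_0 w : rot 0 w = w.
Proof. destruct w; unfold rot; cbn [fst snd]. rewrite cf_0, sf_0. f_equal; ring. Qed.

Lemma sig_opp k r t w : sig k r (- t) w = - sig k r t w.
Proof. unfold sig; ring. Qed.

Lemma gmap_inv k r t w : gmap k r (- t) (gmap k r t w) = w.
Proof.
  unfold gmap. rewrite sig_opp.
  replace (sig k r t (rot (sig k r t w) w)) with (sig k r t w).
  apply rot_inv. unfold sig. rewrite qf_rot. reflexivity.
Qed.

Lemma vnorm_gmap k r t w : vnorm (gmap k r t w) = vnorm w.
Proof. apply vnorm_rot. Qed.

Lemma hmap_inv M k r t z : mdet M = 1 -> hmap M k r (- t) (hmap M k r t z) = z.
Proof.
  intros H. unfold hmap. rewrite adj_left by auto. rewrite gmap_inv. apply adj_right; auto.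
Qed.

Lemma hmap_inv' M k r t z : mdet M = 1 -> hmap M k r t (hmap M k r (- t) z) = z.
Proof.
  intros H. rewrite <- (Ropp_involutive t) at 1. apply hmap_inv; auto.
Qed.

Lemma N_hmap M k r t z : mdet M = 1 ->
  vnorm (mapply (madj M) (hmap M k r t z)) = vnorm (mapply (madj M) z).
Proof. intros H. unfold hmap. rewrite adj_left by auto. apply vnorm_gmap. Qed.

Lemma qf_le r w x : 0 < r -> fst w ^ 2 + snd w ^ 2 <= x * r ^ 2 -> qf r w <= x.
Proof.
  intros Hr H. unfold qf. apply (Rmult_le_reg_r (r * r)). nra.
  rewrite Rmult_assoc, Rinv_l by nra. simpl in H. nra.
Qed.

Lemma qf_gt r w : 0 < r -> r ^ 2 < fst w ^ 2 + snd w ^ 2 -> 1 < qf r w.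
Proof.
  intros Hr H. unfold qf. apply (Rmult_lt_reg_r (r * r)). nra.
  rewrite Rmult_assoc, Rinv_l by nra. simpl in H. nra.
Qed.

Lemma qf_ge0 r w : 0 <= qf r w.
Proof.
  unfold qf. apply Rmult_le_pos. nra.
  destruct (Req_dec r 0). subst. rewrite Rmult_0_r, Rinv_0. lra.
  left. apply Rinv_0_lt_compat. nra.
Qed.

Lemma gmap_out k r t w : 0 < k < 1 -> 0 < r -> r < vnorm w -> gmap k r t w = w.
Proof.
  intros Hk Hr H. unfold gmap, sig. rewrite psi_right; auto.
  rewrite Rmult_0_r. apply rot_0.
  left. apply qf_gt; auto. pose proof (vnorm_sq w). nra.
Qed.

Lemma gmap_in k r t w : 0 < k < 1 -> 0 < r -> vnorm w <= sqrt k * r -> gmap k r t w = rot t w.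
Proof.
  intros Hk Hr H. unfold gmap, sig. rewrite psi_left; auto. rewrite Rmult_1_r; auto.
  apply qf_le; auto. rewrite <- vnorm_sq. pose proof (vnorm_ge0 w).
  pose proof (sqrt_pos k). pose proof (sqrt_sqrt k ltac:(lra)).
  assert (vnorm w ^ 2 <= (sqrt k * r) ^ 2) by (apply pow_incr; lra).
  replace ((sqrt k * r) ^ 2) with (sqrt k * sqrt k * r ^ 2) in H3 by ring. rewrite H2 in H3. lra.
Qed.

Lemma B_char M r (B : pt -> Prop) : mdet M = 1 ->
  (forall z, B z <-> image (mapply M) (fun w => vnorm w <= r) z) ->
  forall z, B z <-> vnorm (mapply (madj M) z) <= r.
Proof.
  intros HM HB z. rewrite HB. split.
  - intros [w [Hw <-]]. rewrite adj_left; auto.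
  - intros H. exists (mapply (madj M) z). split; auto. apply adj_right; auto.
Qed.

Lemma dilate_char M r (B : pt -> Prop) t : mdet M = 1 -> 0 < t ->
  (forall z, B z <-> vnorm (mapply (madj M) z) <= r) ->
  forall w, dilate t B w <-> vnorm (mapply (madj M) w) <= t * r.
Proof.
  intros HM Ht HB w. unfold dilate, image. split.
  - intros [z [Hz <-]]. rewrite mapply_scale, vnorm_scale, Rabs_pos_eq by lra.
    apply HB in Hz. apply Rmult_le_compat_l; lra.
  - intros H. exists (pscale (/ t) w). split.
    + apply HB. rewrite mapply_scale, vnorm_scale, Rabs_pos_eq.
      apply (Rmult_le_reg_l t); auto. rewrite <- Rmult_assoc, Rinv_r, Rmult_1_l by lra. auto.
      left; apply Rinv_0_lt_compat; auto.
    + destruct w; unfold pscale; simpl. f_equal; field; lra.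
Qed.

Lemma rot_alg a b c d : a ^ 2 + c ^ 2 <= 1 -> b ^ 2 + d ^ 2 <= 1 -> a * d - b * c = 1 ->
  d = a /\ b = - c /\ a ^ 2 + c ^ 2 = 1.
Proof.
  intros H1 H2 H3.
  assert (E : (a ^ 2 + c ^ 2) * (b ^ 2 + d ^ 2) = (a * d - b * c) ^ 2 + (a * b + c * d) ^ 2) by ring.
  rewrite H3 in E.
  assert (0 <= a ^ 2 + c ^ 2) by nra. assert (0 <= b ^ 2 + d ^ 2) by nra.
  assert ((a ^ 2 + c ^ 2) * (b ^ 2 + d ^ 2) <= 1) by nra.
  assert (Hab : a * b + c * d = 0) by nra.
  assert (Hs1 : a ^ 2 + c ^ 2 = 1) by nra.
  assert (Hs2 : b ^ 2 + d ^ 2 = 1) by nra.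
  split; [|split; auto].
  - replace d with (d * (a * d - b * c)) by (rewrite H3; ring).
    replace (d * (a * d - b * c)) with (a * (b ^ 2 + d ^ 2) - b * (a * b + c * d)) by ring.
    rewrite Hab, Hs2. ring.
  - replace c with (c * (a * d - b * c)) by (rewrite H3; ring).
    replace (- (c * (a * d - b * c))) with (b * (a ^ 2 + c ^ 2) - a * (a * b + c * d)) by ring.
    rewrite Hab, Hs1. ring.
Qed.

Lemma cf_sf_half a c : a ^ 2 + c ^ 2 = 1 -> 0 < 1 + a ->
  cf (c / (1 + a)) = a /\ sf (c / (1 + a)) = c.
Proof.
  intros H Ha.
  assert (Ht2 : (c / (1 + a)) ^ 2 = (1 - a) / (1 + a)).
  { replace ((c / (1 + a)) ^ 2) with (c ^ 2 / (1 + a) ^ 2) by (field; lra).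
    replace (c ^ 2) with ((1 - a) * (1 + a)) by nra. field. lra. }
  unfold cf, sf. rewrite Ht2. split; field; lra.
Qed.

Lemma abs_div_le p q : 1 <= q -> Rabs (p / q) <= Rabs p.
Proof.
  intros Hq. unfold Rdiv. rewrite Rabs_mult, Rabs_inv, (Rabs_pos_eq q) by lra.
  pose proof (Rabs_pos p).
  assert (0 < / q <= 1). { split. apply Rinv_0_lt_compat; lra.
    rewrite <- Rinv_1. apply Rinv_le_contravar; lra. }
  nra.
Qed.

Lemma sq_ge1 s : 1 <= 1 + s ^ 2.
Proof. pose proof (pow2_ge_0 s); lra. Qed.
Lemma sq2_ge1 s : 1 <= (1 + s ^ 2) ^ 2.
Proof. pose proof (sq_ge1 s). nra. Qed.

Lemma abs_sq s : s ^ 2 = Rabs s ^ 2.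
Proof. rewrite pow2_abs; auto. Qed.

Lemma cf_m1 s : Rabs s <= 1 -> Rabs (cf s - 1) <= 2 * Rabs s.
Proof.
  intros H. replace (cf s - 1) with ((- 2 * s ^ 2) / (1 + s ^ 2)).
  2:{ unfold cf. pose proof (sq_ge1 s). field. lra. }
  eapply Rle_trans; [apply abs_div_le, sq_ge1|].
  rewrite Rabs_mult, (Rabs_pos_eq (s ^ 2)) by apply pow2_ge_0.
  replace (Rabs (-2)) with 2 by (rewrite Rabs_left; lra).
  rewrite abs_sq. pose proof (Rabs_pos s). nra.
Qed.

Lemma sf_b s : Rabs (sf s) <= 2 * Rabs s.
Proof.
  unfold sf. eapply Rle_trans; [apply abs_div_le, sq_ge1|].
  rewrite Rabs_mult, (Rabs_pos_eq 2) by lra. lra.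
Qed.

Lemma cfd_b s : Rabs s <= 1/2 -> Rabs (cfd s) <= 2.
Proof.
  intros H. unfold cfd. eapply Rle_trans; [apply abs_div_le, sq2_ge1|].
  rewrite Rabs_mult, Rabs_left by lra. lra.
Qed.

Lemma sfd_b s : Rabs s <= 1/2 -> Rabs (sfd s) <= 2.
Proof.
  intros H. unfold sfd. eapply Rle_trans; [apply abs_div_le, sq2_ge1|].
  rewrite Rabs_mult, (Rabs_pos_eq 2) by lra.
  assert (s ^ 2 <= 1/4) by (rewrite abs_sq; pose proof (Rabs_pos s); nra).
  pose proof (pow2_ge_0 s).
  rewrite Rabs_pos_eq by lra. lra.
Qed.

Lemma sig_bound k r t w : 0 < k < 1 -> Rabs (sig k r t w) <= Rabs t.
Proof.
  intros Hk. unfold sig. rewrite Rabs_mult. pose proof (psi_bound k (qf r w) Hk).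
  rewrite (Rabs_pos_eq (psi _ _)) by lra. pose proof (Rabs_pos t). nra.
Qed.

Lemma mu_S k r t w : 0 < k < 1 -> 0 < r ->
  Rabs (mu k r t w) * (fst w ^ 2 + snd w ^ 2) <= 6 * Rabs t / (1 - k).
Proof.
  intros Hk Hr.
  set (S := fst w ^ 2 + snd w ^ 2).
  assert (HS : 0 <= S) by (unfold S; nra).
  assert (Hq : qf r w = S / (r * r)) by (unfold qf, S, Rdiv; simpl; f_equal; ring).
  assert (E : Rabs (mu k r t w) * S = 2 * Rabs t * (Rabs (psid k (qf r w)) * qf r w)).
  { unfold mu. rewrite Hq. unfold Rdiv. rewrite !Rabs_mult.
    rewrite (Rabs_pos_eq 2) by lra. rewrite (Rabs_pos_eq (/ (r * r))).
    2:{ left; apply Rinv_0_lt_compat; nra. }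
    ring. }
  rewrite E. pose proof (qf_ge0 r w). pose proof (Rabs_pos t).
  assert (Rabs (psid k (qf r w)) * qf r w <= 3 / (1 - k)).
  { destruct (Rle_or_lt 1 (qf r w)).
    - rewrite psid_right by auto. rewrite Rabs_R0, Rmult_0_l.
      left; apply Rdiv_lt_0_compat; lra.
    - pose proof (psid_bound k (qf r w) Hk). pose proof (Rabs_pos (psid k (qf r w))). nra. }
  unfold Rdiv in *. nra.
Qed.

Lemma entry_b m x y A : Rabs A <= 2 * (Rabs x + Rabs y) ->
  Rabs (m * x * A) <= 3 * Rabs m * (x ^ 2 + y ^ 2).
Proof.
  intros H. rewrite !Rabs_mult. rewrite (abs_sq x), (abs_sq y).
  pose proof (Rabs_pos m). pose proof (Rabs_pos x). pose proof (Rabs_pos y). pose proof (Rabs_pos A).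
  assert (Rabs x * Rabs A <= 2 * Rabs x * (Rabs x + Rabs y)) by nra.
  assert (2 * Rabs x * (Rabs x + Rabs y) <= 3 * (Rabs x ^ 2 + Rabs y ^ 2)).
  { pose proof (pow2_ge_0 (Rabs x - Rabs y)). nra. }
  nra.
Qed.

Lemma A_b s x y : Rabs s <= 1/2 -> Rabs (cfd s * x - sfd s * y) <= 2 * (Rabs x + Rabs y).
Proof.
  intros H. unfold Rminus. eapply Rle_trans; [apply Rabs_triang|].
  rewrite Rabs_Ropp, !Rabs_mult. pose proof (cfd_b s H). pose proof (sfd_b s H).
  pose proof (Rabs_pos x). pose proof (Rabs_pos y). nra.
Qed.

Lemma B_b s x y : Rabs s <= 1/2 -> Rabs (sfd s * x + cfd s * y) <= 2 * (Rabs x + Rabs y).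
Proof.
  intros H. eapply Rle_trans; [apply Rabs_triang|].
  rewrite !Rabs_mult. pose proof (cfd_b s H). pose proof (sfd_b s H).
  pose proof (Rabs_pos x). pose proof (Rabs_pos y). nra.
Qed.

Lemma Dg_bound k r t w : 0 < k < 1 -> 0 < r -> Rabs t <= 1/2 ->
  mF (msub (Dg k r t w) mI) <= 80 * Rabs t / (1 - k).
Proof.
  intros Hk Hr Ht.
  pose proof (sig_bound k r t w Hk) as Hs.
  set (s := sig k r t w) in *. set (m := mu k r t w).
  pose proof (mu_S k r t w Hk Hr) as HmS. fold m in HmS.
  assert (Hs1 : Rabs s <= 1/2) by lra.
  pose proof (cf_m1 s ltac:(lra)) as Hc. pose proof (sf_b s) as Hn.
  pose proof (entry_b m (fst w) (snd w) _ (A_b s (fst w) (snd w) Hs1)) as E1.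
  pose proof (entry_b m (snd w) (fst w) (cfd s * fst w - sfd s * snd w) ltac:(pose proof (A_b s (fst w) (snd w) Hs1); lra)) as E2.
  pose proof (entry_b m (fst w) (snd w) _ (B_b s (fst w) (snd w) Hs1)) as E3.
  pose proof (entry_b m (snd w) (fst w) (sfd s * fst w + cfd s * snd w) ltac:(pose proof (B_b s (fst w) (snd w) Hs1); lra)) as E4.
  replace (snd w ^ 2 + fst w ^ 2) with (fst w ^ 2 + snd w ^ 2) in E2, E4 by ring.
  assert (H1k : 1 <= / (1 - k)). { rewrite <- Rinv_1. apply Rinv_le_contravar; lra. }
  assert (Ht0 : 0 <= Rabs t) by apply Rabs_pos.
  assert (Hb : 3 * Rabs m * (fst w ^ 2 + snd w ^ 2) <= 18 * Rabs t / (1 - k)).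
  { unfold Rdiv in *. nra. }
  unfold mF, Dg, msub, mI. cbn [m11 m12 m21 m22]. fold s m.
  replace (cf s + m * fst w * (cfd s * fst w - sfd s * snd w) - 1)
    with ((cf s - 1) + m * fst w * (cfd s * fst w - sfd s * snd w)) by ring.
  replace (- sf s + m * snd w * (cfd s * fst w - sfd s * snd w) - 0)
    with (- sf s + m * snd w * (cfd s * fst w - sfd s * snd w)) by ring.
  replace (sf s + m * fst w * (sfd s * fst w + cfd s * snd w) - 0)
    with (sf s + m * fst w * (sfd s * fst w + cfd s * snd w)) by ring.
  replace (cf s + m * snd w * (sfd s * fst w + cfd s * snd w) - 1)
    with ((cf s - 1) + m * snd w * (sfd s * fst w + cfd s * snd w)) by ring.
  pose proof (Rabs_triang (cf s - 1) (m * fst w * (cfd s * fst w - sfd s * snd w))).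
  pose proof (Rabs_triang (- sf s) (m * snd w * (cfd s * fst w - sfd s * snd w))).
  pose proof (Rabs_triang (sf s) (m * fst w * (sfd s * fst w + cfd s * snd w))).
  pose proof (Rabs_triang (cf s - 1) (m * snd w * (sfd s * fst w + cfd s * snd w))).
  rewrite Rabs_Ropp in *.
  assert (2 * Rabs t <= 2 * Rabs t / (1 - k)) by (unfold Rdiv; nra).
  unfold Rdiv in *. lra.
Qed.

Lemma conj_sub_l M X : mdet M = 1 ->
  mmul (madj M) (mmul (msub X mI) M) = msub (mmul (madj M) (mmul X M)) mI.
Proof. intros H. unfold mdet in H. apply mat_eq; unfold mmul, madj, msub, mI; simpl; lra. Qed.

Lemma conj_sub_r M X : mdet M = 1 ->
  mmul M (mmul (msub X mI) (madj M)) = msub (mmul M (mmul X (madj M))) mI.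
Proof. intros H. unfold mdet in H. apply mat_eq; unfold mmul, madj, msub, mI; simpl; lra. Qed.

Lemma mF3 A X Bm : mF (mmul A (mmul X Bm)) <= mF A * mF X * mF Bm.
Proof.
  eapply Rle_trans; [apply mF_mmul|]. pose proof (mF_mmul X Bm).
  pose proof (mF_ge0 A). rewrite Rmult_assoc. apply Rmult_le_compat_l; auto.
Qed.

Lemma diam_ge (B : pt -> Prop) K x y : (forall z, B z -> vnorm z <= K) -> B x -> B y ->
  vnorm (psub x y) <= diameter B.
Proof.
  intros HK Hx Hy. unfold diameter.
  destruct (lub_facts (fun s => exists x y, B x /\ B y /\ s = vnorm (psub x y))
     (vnorm (psub x y)) (4 * K)) as [H1 _].
  - exists x, y; auto.
  - intros s [x' [y' [Hx' [Hy' ->]]]].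
    eapply Rle_trans; [apply vnorm_le_sum|]. unfold psub; cbn [fst snd].
    pose proof (Rabs_triang (fst x') (- fst y')). pose proof (Rabs_triang (snd x') (- snd y')).
    rewrite Rabs_Ropp in *. unfold Rminus.
    pose proof (abs_le_vnorm1 x'). pose proof (abs_le_vnorm2 x').
    pose proof (abs_le_vnorm1 y'). pose proof (abs_le_vnorm2 y').
    pose proof (HK _ Hx'). pose proof (HK _ Hy'). lra.
  - apply H1. exists x, y; auto.
Qed.

Theorem mainTheorem11 :
  forall (eps1 k E : R), 0 < eps1 -> 0 < k < 1 -> 1 <= E ->
  exists eps, 0 < eps /\
  forall (B : pt -> Prop) (L : mat2),
    (exists e, e <= E /\ centered_ellipse_ecc B e) ->
    diameter B <= eps1 ->
    mdet L = 1 ->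
    opnorm (msub L mI) < eps ->
    (forall w, image (mapply L) B w <-> B w) ->
    exists (h : pt -> pt) (Dh : pt -> mat2),
      C1_area_pres_diffeo h Dh /\
      (* (i) *)   (forall z, ~ B z -> h z = z) /\
      (* (ii) *)  (forall z, dilate (sqrt k) B z -> h z = mapply L z) /\
      (* (iii) *) (forall t, 0 < t -> forall w,
                      image h (dilate t B) w <-> dilate t B w) /\
      (* (iv) *)  (forall z, vnorm (psub (h z) z) <= eps1) /\
      (* (v) *)   (forall z, opnorm (msub (Dh z) mI) <= eps1).
Proof.
  intros eps1 k E He1 Hk HE.
  assert (HE2 : 0 < E ^ 2) by (apply pow_lt; lra).
  assert (HE4 : 0 < E ^ 4) by (apply pow_lt; lra).
  assert (H1k : 0 < 1 - k) by lra.
  set (eps := Rmin (1 / (128 * E ^ 2)) (eps1 * (1 - k) / (81920 * E ^ 4))).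
  assert (Heps1 : eps <= 1 / (128 * E ^ 2)) by apply Rmin_l.
  assert (Heps2 : eps <= eps1 * (1 - k) / (81920 * E ^ 4)) by apply Rmin_r.
  exists eps. split.
  { apply Rmin_pos; apply Rdiv_lt_0_compat; try nra. }
  intros B L [e [HeE [M [r [Hr [HdM [HoM HB]]]]]]] Hdiam HdL HLI HLB.
  set (N := madj M).
  pose proof (B_char M r B HdM HB) as HBc. fold N in HBc.
  assert (HmM : mF M <= 4 * E) by (pose proof (mF_le_opnorm M); lra).
  assert (HmN : mF N <= 4 * E) by (unfold N; rewrite mF_adj; auto).
  assert (HLB' : forall z, B z -> B (mapply L z)) by (intros z Hz; apply HLB; exists z; auto).
  set (P := mmul N (mmul L M)).
  assert (HPu : forall u, vnorm u <= r -> vnorm (mapply P u) <= r).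
  { intros u Hu. unfold P. rewrite !mapply_mmul. apply HBc. apply HLB'. apply HBc.
    unfold N. rewrite adj_left; auto. }
  assert (Hr0 : 0 <= r) by lra.
  assert (Hc1 : m11 P ^ 2 + m21 P ^ 2 <= 1).
  { assert (vnorm (r, 0) <= r) by (apply vnorm_le_iff; [lra| cbn [fst snd]; nra]).
    pose proof (HPu (r, 0) H) as H'. clear H. rename H' into H.
    apply vnorm_le_iff in H; auto. unfold mapply in H; cbn [fst snd] in H.
    replace ((m11 P * r + m12 P * 0) ^ 2 + (m21 P * r + m22 P * 0) ^ 2)
      with ((m11 P ^ 2 + m21 P ^ 2) * r ^ 2) in H by ring.
    apply (Rmult_le_reg_r (r ^ 2)). nra. lra. }
  assert (Hc2 : m12 P ^ 2 + m22 P ^ 2 <= 1).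
  { assert (vnorm (0, r) <= r) by (apply vnorm_le_iff; [lra| cbn [fst snd]; nra]).
    pose proof (HPu (0, r) H) as H'. clear H. rename H' into H.
    apply vnorm_le_iff in H; auto. unfold mapply in H; cbn [fst snd] in H.
    replace ((m11 P * 0 + m12 P * r) ^ 2 + (m21 P * 0 + m22 P * r) ^ 2)
      with ((m12 P ^ 2 + m22 P ^ 2) * r ^ 2) in H by ring.
    apply (Rmult_le_reg_r (r ^ 2)). nra. lra. }
  assert (HdP : mdet P = 1).
  { unfold P, N. rewrite !mdet_mmul, mdet_adj, HdM, HdL. ring. }
  destruct (rot_alg (m11 P) (m12 P) (m21 P) (m22 P) Hc1 Hc2 HdP) as [Hd [Hb Hac]].
  set (dl := mF (msub P mI)).
  assert (Hdl : dl <= 64 * E ^ 2 * eps).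
  { unfold dl, P. replace (msub (mmul N (mmul L M)) mI) with (mmul N (mmul (msub L mI) M))
      by (unfold N; apply conj_sub_l; auto).
    eapply Rle_trans; [apply mF3|].
    pose proof (mF_le_opnorm (msub L mI)). pose proof (mF_ge0 N). pose proof (mF_ge0 M).
    pose proof (mF_ge0 (msub L mI)).
    assert (mF N * mF (msub L mI) * mF M <= 4 * E * (4 * eps) * (4 * E)).
    { apply Rmult_le_compat; [nra|lra| |lra]. apply Rmult_le_compat; lra. }
    replace (64 * E ^ 2 * eps) with (4 * E * (4 * eps) * (4 * E)) by ring. lra. }
  assert (Hdl2 : dl <= 1/2).
  { assert (64 * E ^ 2 * eps <= 1/2). { apply Rle_trans with (64 * E ^ 2 * (1 / (128 * E ^ 2))).
      apply Rmult_le_compat_l; [lra|exact Heps1]. right; field; lra. } lra. }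
  assert (Ha : Rabs (m11 P - 1) <= dl) by (unfold dl, mF, msub, mI; cbn [m11 m12 m21 m22];
     pose proof (Rabs_pos (m12 P - 0)); pose proof (Rabs_pos (m21 P - 0)); pose proof (Rabs_pos (m22 P - 1)); lra).
  assert (Hc : Rabs (m21 P) <= dl).
  { unfold dl, mF, msub, mI; cbn [m11 m12 m21 m22]. replace (m21 P - 0) with (m21 P) by ring.
    pose proof (Rabs_pos (m12 P - 0)); pose proof (Rabs_pos (m11 P - 1)); pose proof (Rabs_pos (m22 P - 1)); lra. }
  assert (Ha2 : 1/2 <= m11 P) by (apply Rabs_le_between in Ha; lra).
  set (t := m21 P / (1 + m11 P)).
  assert (Ht : Rabs t <= dl) by (eapply Rle_trans; [apply abs_div_le; lra| auto]).
  assert (Ht2 : Rabs t <= 1/2) by lra.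
  destruct (cf_sf_half (m11 P) (m21 P) Hac ltac:(lra)) as [Hcf Hsf]. fold t in Hcf, Hsf.
  assert (HrotP : forall w, rot t w = mapply P w).
  { intros [x y]. unfold rot, mapply; cbn [fst snd]. rewrite Hcf, Hsf, Hd, Hb. f_equal; ring. }
  assert (Hrn : r <> 0) by lra.
  exists (hmap M k r t), (Dh M k r t).
  split; [|split; [|split; [|split; [|split]]]].
  -
    split; [apply hmap_C1; auto|split].
    + exists (hmap M k r (- t)). split; [intros; apply hmap_inv; auto|split].
      intros; apply hmap_inv'; auto.
      exists (Dh M k r (- t)). apply hmap_C1; auto.
    + intros z. unfold Dh. rewrite !mdet_mmul, Dg_det, mdet_adj, HdM.
      rewrite !Rmult_1_l. apply Rabs_R1.
  -
    intros z Hz. assert (Hn : r < vnorm (mapply N z)).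
    { destruct (Rlt_or_le r (vnorm (mapply N z))); auto. exfalso; apply Hz, HBc; auto. }
    unfold hmap. fold N. rewrite gmap_out; auto. unfold N. apply adj_right; auto.
  -
    intros z Hz. assert (Hsk : 0 < sqrt k) by (apply sqrt_lt_R0; lra).
    apply (dilate_char M r B (sqrt k) HdM Hsk HBc) in Hz.
    unfold hmap. fold N. rewrite gmap_in; auto. rewrite HrotP. unfold P.
    rewrite !mapply_mmul. unfold N. rewrite !adj_right; auto.
  -
    intros t' Ht' w. rewrite (dilate_char M r B t' HdM Ht' HBc). split.
    + intros [z [Hz <-]]. apply (dilate_char M r B t' HdM Ht' HBc) in Hz.
      rewrite N_hmap; auto.
    + intros Hw. exists (hmap M k r (- t) w). split.
      * apply (dilate_char M r B t' HdM Ht' HBc). rewrite N_hmap; auto.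
      * apply hmap_inv'; auto.
  -
    intros z. destruct (classic (B z)) as [Hz|Hz].
    + eapply Rle_trans; [|apply Hdiam].
      apply (diam_ge B (mF M * r)).
      * intros x Hx. rewrite <- (adj_right M x HdM). eapply Rle_trans; [apply mapply_bound|].
        apply Rmult_le_compat_l. apply mF_ge0. apply HBc; auto.
      * apply HBc. fold N. unfold N. rewrite N_hmap; auto. apply HBc; auto.
      * auto.
    + assert (Hn : r < vnorm (mapply N z)).
      { destruct (Rlt_or_le r (vnorm (mapply N z))); auto. exfalso; apply Hz, HBc; auto. }
      unfold hmap. fold N. rewrite gmap_out; auto. unfold N. rewrite adj_right; auto.
      unfold vnorm, psub. cbn [fst snd]. rewrite !Rminus_diag. replace (0 ^ 2 + 0 ^ 2) with 0 by ring.
      rewrite sqrt_0. lra.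
  -
    intros z. unfold Dh. rewrite <- conj_sub_r by auto.
    eapply Rle_trans; [apply opnorm_le_F|]. eapply Rle_trans; [apply mF3|].
    pose proof (Dg_bound k r t (mapply (madj M) z) Hk ltac:(lra) Ht2) as HD.
    pose proof (mF_ge0 M). pose proof (mF_ge0 (madj M)).
    pose proof (mF_ge0 (msub (Dg k r t (mapply (madj M) z)) mI)).

    pose proof (mF_adj M) as HaM.
    assert (0 <= 80 * Rabs t / (1 - k)) by (pose proof (Rabs_pos t); apply Rdiv_le_0_compat; lra).
    apply Rle_trans with (4 * E * (80 * Rabs t / (1 - k)) * (4 * E)).
    { apply Rmult_le_compat; [nra|lra| |lra]. apply Rmult_le_compat; lra. }
    assert (Htl : Rabs t <= 64 * E ^ 2 * eps) by lra.
    apply Rle_trans with (4 * E * (80 * (64 * E ^ 2 * eps) / (1 - k)) * (4 * E)).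
    { unfold Rdiv. pose proof (Rabs_pos t). assert (0 < / (1 - k)) by (apply Rinv_0_lt_compat; lra).
      apply Rmult_le_compat_r; [lra|]. apply Rmult_le_compat_l; [lra|].
      apply Rmult_le_compat_r; [lra|]. lra. }
    replace (4 * E * (80 * (64 * E ^ 2 * eps) / (1 - k)) * (4 * E))
      with ((81920 * E ^ 4) / (1 - k) * eps) by (field; lra).
    apply Rle_trans with ((81920 * E ^ 4) / (1 - k) * (eps1 * (1 - k) / (81920 * E ^ 4))).
    { apply Rmult_le_compat_l; auto. apply Rlt_le, Rdiv_lt_0_compat; lra. }
    right. field. lra.
Qed.
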